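(* Let $D$ be a pv-monoid (idempotent, with symmetric valuation function), $P$ a nonempty finite set of ports, $I,J$ nonempty finite index sets and $m_i$ ($i\in I$), $m'_j$ ($j\in J$) full monomials over $P$. Then \[\Big(\sum_{i\in I}m_i\Big)\uplus\Big(\sum_{j\in J}m'_j\Big)\equiv\begin{cases}\sum_{i\in I}m_i+\sum_{j\in J}m'_j&\text{if } m_i\not\equiv m'_j\text{ for every } i\in I,\ j\in J,\\ 0&\text{otherwise.}\end{cases}\]
   Context: A pv-monoid $(D,\oplus,\mathrm{val},\otimes,0,1)$ consists of a commutative monoid $(D,\oplus,0)$, a map $\mathrm{val}$ from nonempty finite sequences over $D$ to $D$ with $\mathrm{val}(d)=d$ and $\mathrm{val}(d_1,\dots,d_n)=0$ whenever some $d_i=0$, a binary operation $\otimes$ and an element $1$ with $\mathrm{val}(1,\dots,1)=1$, $0\otimes d=d\otimes0=0$, $1\otimes d=d\otimes1=d$. Standing assumption: $D$ is idempotent and $\mathrm{val}$ is symmetric. An empty $\oplus$-sum is $0$. $I(P)$ is the set of nonempty subsets of $P$, $C(P)$ the set of nonempty subsets of $I(P)$. PIL formulas: $\phi::=true\mid p\mid\overline{\phi}\mid\phi\vee\phi$ ($p\in P$), $\alpha\models_i p$ iff $p\in\alpha$, negation and disjunction as usual, $\wedge$ via De Morgan. A full monomial is a PIL formula $\bigwedge_{p\in P_+}p\wedge\bigwedge_{p\in P_-}\overline p$ with $P_+\cup P_-=P$, $P_+\cap P_-=\emptyset$. PCL formulas: $f::=true\mid\phi\mid\neg f\mid f\sqcup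 f\mid f+f$; $\gamma\models\phi$ iff every $\alpha\in\gamma$ satisfies $\phi$; $\neg,\sqcup$ are complement and union; $\gamma\models f_1+f_2$ iff $\gamma=\gamma_1\cup\gamma_2$ with $\gamma_1,\gamma_2\in C(P)$, $\gamma_1\models f_1,\gamma_2\models f_2$. $\sum$ is $+$-combination. Weighted formulas: constants $d\in D$, PCL formulas, $\oplus,\otimes,\uplus$ and $*$; semantics $\|\cdot\|:C(P)\to D$ with $\|d\|(\gamma)=d$, $\|f\|(\gamma)=1$ if $\gamma\models f$ and $0$ otherwise, $\oplus,\otimes$ pointwise, $\|\zeta_1\uplus\zeta_2\|(\gamma)=\bigoplus(\|\zeta_1\|(\gamma_1)\otimes\|\zeta_2\|(\gamma_2))$ over disjoint $\gamma_1,\gamma_2\in C(P)$ with union $\gamma$. $\equiv$ means equality of semantics on all of $C(P)$. *)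

(* Defs.v *)
From HB Require Import structures.
From mathcomp Require Import all_boot.
From Stdlib Require List Permutation.
Set Implicit Arguments. Unset Strict Implicit. Unset Printing Implicit Defensive.

Record pvMonoid := PvMonoid {
  pv_car :> Type;
  pv_add : pv_car -> pv_car -> pv_car;
  pv_val : seq pv_car -> pv_car;          (* only meaningful on nonempty sequences *)
  pv_mul : pv_car -> pv_car -> pv_car;
  pv_zero : pv_car;
  pv_one : pv_car;
  pv_addA : forall a b c, pv_add a (pv_add b c) = pv_add (pv_add a b) c;
  pv_addC : forall a b, pv_add a b = pv_add b a;
  pv_add0d : forall a, pv_add pv_zero a = a;
  pv_val1 : forall d, pv_val [:: d] = d;
  pv_val0 : forall s, s <> [::] -> List.In pv_zero s -> pv_val s = pv_zero;
  pv_val_one : forall n, pv_val (nseq n.+1 pv_one) = pv_one;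
  pv_mul0d : forall d, pv_mul pv_zero d = pv_zero;
  pv_muld0 : forall d, pv_mul d pv_zero = pv_zero;
  pv_mul1d : forall d, pv_mul pv_one d = d;
  pv_muld1 : forall d, pv_mul d pv_one = d;
  pv_idem : forall d, pv_add d d = d;
  pv_val_sym : forall s t, s <> [::] -> Permutation.Permutation s t -> pv_val s = pv_val t
}.

Section Formulas.
Variable P : finType.

(* interactions I(P): nonempty subsets of P; C(P): nonempty sets of interactions *)
Definition isI (a : {set P}) : bool := a != set0.
Definition isC (g : {set {set P}}) : bool := (g != set0) && [forall a in g, isI a].

Inductive pil : Type :=
| PTrue : pil
| PVar : P -> pil
| PNeg : pil -> pil
| POr : pil -> pil -> pil.

Fixpoint sat_i (a : {set P}) (phi : pil) : bool :=
  match phi with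
  | PTrue => true
  | PVar p => p \in a
  | PNeg f => ~~ sat_i a f
  | POr f1 f2 => sat_i a f1 || sat_i a f2
  end.

Definition PAnd (f1 f2 : pil) : pil := PNeg (POr (PNeg f1) (PNeg f2)).

(* full monomial with positive part Pp (negative part = complement of Pp):
   /\_{p in P} (p if p \in Pp, ~p otherwise) *)
Definition full_monomial (Pp : {set P}) : pil :=
  foldr (fun p acc => PAnd (if p \in Pp then PVar p else PNeg (PVar p)) acc)
        PTrue (enum P).

Inductive pcl : Type :=
| FTrue : pcl
| FPil : pil -> pcl
| FNeg : pcl -> pcl
| FUnion : pcl -> pcl -> pcl
| FPlus : pcl -> pcl -> pcl.

Fixpoint sat (g : {set {set P}}) (f : pcl) : bool :=
  match f with
  | FTrue => true
  | FPil phi => [forall a in g, sat_i a phi]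
  | FNeg f1 => ~~ sat g f1
  | FUnion f1 f2 => sat g f1 || sat g f2
  | FPlus f1 f2 =>
      [exists g1 : {set {set P}}, exists g2 : {set {set P}},
         [&& isC g1, isC g2, g == g1 :|: g2, sat g1 f1 & sat g2 f2]]
  end.

Definition pcl_sum (s : seq pcl) : pcl :=
  match s with
  | [::] => FTrue (* unused: sums are over nonempty index sets *)
  | x :: s' => foldl FPlus x s'
  end.

Variable D : pvMonoid.

Inductive wpcl : Type :=
| WConst : D -> wpcl
| WPcl : pcl -> wpcl
| WOplus : wpcl -> wpcl -> wpcl
| WOtimes : wpcl -> wpcl -> wpcl
| WUplus : wpcl -> wpcl -> wpcl.

Fixpoint wsem (z : wpcl) (g : {set {set P}}) : D :=
  match z with
  | WConst d => d
  | WPcl f => if sat g f then pv_one D else pv_zero D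
  | WOplus z1 z2 => pv_add (wsem z1 g) (wsem z2 g)
  | WOtimes z1 z2 => pv_mul (wsem z1 g) (wsem z2 g)
  | WUplus z1 z2 =>
      \big[@pv_add D / pv_zero D]_(p : {set {set P}} * {set {set P}} |
           [&& isC p.1, isC p.2, [disjoint p.1 & p.2] & p.1 :|: p.2 == g])
         pv_mul (wsem z1 p.1) (wsem z2 p.2)
  end.

Definition wequiv (z1 z2 : wpcl) : Prop :=
  forall g : {set {set P}}, isC g -> wsem z1 g = wsem z2 g.

End Formulas.

(* Main.v *)
Require Import Defs.
From HB Require Import structures.
From mathcomp Require Import all_boot.
From Stdlib Require Import Classical.

Section Helpers.
Variable D : pvMonoid.

Lemma big01_0 (T : Type) (r : seq T) (Pr : pred T) (F : T -> D) :
  (forall x, Pr x -> F x = pv_zero D) ->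
  \big[@pv_add D/pv_zero D]_(x <- r | Pr x) F x = pv_zero D.
Proof.
move=> H; elim: r => [|x r IH]; rewrite ?big_nil ?big_cons //.
by case: ifP => // Px; rewrite IH H // pv_add0d.
Qed.

Lemma big01_01 (T : Type) (r : seq T) (Pr : pred T) (F : T -> D) :
  (forall x, Pr x -> F x = pv_zero D \/ F x = pv_one D) ->
  \big[@pv_add D/pv_zero D]_(x <- r | Pr x) F x = pv_zero D \/
  \big[@pv_add D/pv_zero D]_(x <- r | Pr x) F x = pv_one D.
Proof.
move=> H; elim: r => [|x r IH]; rewrite ?big_nil ?big_cons; first by left.
case: ifP => // Px; case: (H x Px) => ->; case: IH => ->;
  rewrite ?pv_add0d ?pv_idem; by [left|right|rewrite pv_addC pv_add0d; right].
Qed.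

Lemma big01_1 (T : eqType) (r : seq T) (Pr : pred T) (F : T -> D) x0 :
  (forall x, Pr x -> F x = pv_zero D \/ F x = pv_one D) ->
  x0 \in r -> Pr x0 -> F x0 = pv_one D ->
  \big[@pv_add D/pv_zero D]_(x <- r | Pr x) F x = pv_one D.
Proof.
move=> H; elim: r => [|x r IH] //; rewrite big_cons inE => /orP [/eqP <-|xr] Px0 F0.
  rewrite Px0 F0; case: (@big01_01 _ r _ _ H) => ->; last by rewrite pv_idem.
  by rewrite pv_addC pv_add0d.
rewrite IH //; case: ifP => // Px; case: (H x Px) => ->;
  by rewrite ?pv_add0d ?pv_idem.
Qed.

Lemma mul_if (a b : bool) :
  pv_mul (if a then pv_one D else pv_zero D) (if b then pv_one D else pv_zero D)
  = if a && b then pv_one D else pv_zero D.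
Proof. by case: a; case: b; rewrite ?pv_mul1d ?pv_mul0d. Qed.

Lemma triv_all : pv_one D = pv_zero D -> forall d : D, d = pv_zero D.
Proof. by move=> e d; rewrite -(pv_mul1d d) e pv_mul0d. Qed.
End Helpers.

Section Sat.
Variable P : finType.

Lemma sat_i_fm (a Pp : {set P}) : sat_i a (full_monomial Pp) = (a == Pp).
Proof.
rewrite /full_monomial.
have -> : forall r : seq P, sat_i a (foldr (fun p acc => PAnd (if p \in Pp then PVar p
     else PNeg (PVar p)) acc) (PTrue P) r) = all (fun p => (p \in a) == (p \in Pp)) r.
  elim=> [|p r IH] //=; rewrite IH.

  set A := all _ r; case: (p \in Pp) => /=; case: (p \in a); case: A; reflexivity.
apply/allP/eqP => [H|->]; last by move=> p _; rewrite eqxx.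
by apply/setP => p; apply/eqP; apply: H; rewrite mem_enum.
Qed.

Lemma sat_fm (g : {set {set P}}) Pp :
  sat g (FPil (full_monomial Pp)) = [forall a in g, a == Pp].
Proof. by apply: eq_forallb => a; rewrite sat_i_fm. Qed.

Lemma sat_fm_C (g : {set {set P}}) Pp : isC g ->
  sat g (FPil (full_monomial Pp)) = (Pp != set0) && (g == [set Pp]).
Proof.
case/andP => g0 /forall_inP gI; rewrite sat_fm.
apply/forall_inP/andP.
- move=> H; have [a ag] := set0Pn _ g0.
  have /eqP ea := H a ag; split; first by rewrite -ea; exact: gI.
  apply/eqP/setP => b; rewrite in_set1; apply/idP/eqP => [/H/eqP //|->].
  by rewrite -ea.
- by case=> _ /eqP -> b; rewrite in_set1.
Qed.

Lemma sat_fm_C' (g : {set {set P}}) Pp : isC g ->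
  [forall a in g, sat_i a (full_monomial Pp)] = (Pp != set0) && (g == [set Pp]).
Proof. exact: sat_fm_C. Qed.

Lemma isC_seq (x0 : {set P}) s : all (fun x => x != set0) (x0 :: s) ->
  isC [set x in x0 :: s].
Proof.
move=> A; apply/andP; split.
  by apply/set0Pn; exists x0; rewrite inE mem_head.
by apply/forall_inP => a; rewrite inE => ha; exact: (allP A a ha).
Qed.

Lemma isC1 (x : {set P}) : x != set0 -> isC [set x].
Proof.
move=> x0; have := @isC_seq x [::]; rewrite /= andbT => /(_ x0).
by congr isC; apply/setP => b; rewrite !inE.
Qed.

Lemma sat_sum (x0 : {set P}) s g : isC g ->
  sat g (pcl_sum [seq FPil (full_monomial x) | x <- x0 :: s]) =
  all (fun x => x != set0) (x0 :: s) && (g == [set x in x0 :: s]).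
Proof.
elim/last_ind: s g => [|s y IH] g Cg.
  move: (@sat_fm_C g x0 Cg) => /= ->; rewrite andbT; congr (_ && (g == _)).
  by apply/setP => b; rewrite !inE.
have IH' := IH _; rewrite /= in IH'.
rewrite /= map_rcons foldl_rcons /=.
apply/existsP/andP.
- case=> g1 /existsP [g2 /and5P [C1 C2 /eqP -> S1 S2]].
  rewrite IH' // in S1; rewrite sat_fm_C' // in S2.
  case/andP: S1 => /andP [A0 A1] /eqP ->; case/andP: S2 => A2 /eqP ->.
  split; first by rewrite all_rcons A2 A1 A0.
  apply/eqP/setP => b; rewrite !inE mem_rcons !inE.
  by case: (b == y); rewrite ?orbT ?orbF.
- case=> A /eqP ->.
  move: A; rewrite all_rcons => /andP [A0 /andP [Ay A]].
  exists [set x in x0 :: s]; apply/existsP; exists [set y].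
  apply/and5P; split.
  + by apply: isC_seq; rewrite /= A0 A.
  + exact: isC1.
  + apply/eqP/setP => b; rewrite !inE mem_rcons !inE.
    by case: (b == y); rewrite ?orbT ?orbF.
  + by rewrite IH' ?A0 ?A ?eqxx //; apply: isC_seq; rewrite /= A0 A.
  + by rewrite sat_fm_C' ?Ay ?eqxx //; exact: isC1.
Qed.

End Sat.
Theorem mainTheorem14 (D : pvMonoid) (P I J : finType)
  (hP : 0 < #|P|) (hI : 0 < #|I|) (hJ : 0 < #|J|)
  (m : I -> {set P}) (m' : J -> {set P}) :
  let mi i := WPcl D (FPil (full_monomial (m i))) in
  let mj j := WPcl D (FPil (full_monomial (m' j))) in
  let sI := pcl_sum [seq FPil (full_monomial (m i)) | i <- enum I] in
  let sJ := pcl_sum [seq FPil (full_monomial (m' j)) | j <- enum J] in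
  ((forall i j, ~ wequiv (mi i) (mj j)) ->
     wequiv (WUplus (WPcl D sI) (WPcl D sJ)) (WPcl D (FPlus sI sJ)))
  /\
  ((exists i j, wequiv (mi i) (mj j)) ->
     wequiv (WUplus (WPcl D sI) (WPcl D sJ)) (WConst P (pv_zero D))).
Proof.
move=> mi mj sI sJ; rewrite /mi /mj; clear mi mj.
have [i0 [rI EI]] : exists i0 rI, enum I = i0 :: rI.
  case E: (enum I) => [|i0 rI]; last by exists i0, rI.
  by move: hI; rewrite cardE E.
have [j0 [rJ EJ]] : exists j0 rJ, enum J = j0 :: rJ.
  case E: (enum J) => [|j0 rJ]; last by exists j0, rJ.
  by move: hJ; rewrite cardE E.
set SI := [set x in map m (enum I)].
set SJ := [set x in map m' (enum J)].
set nI := all (fun x => x != set0) (map m (enum I)).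
set nJ := all (fun x => x != set0) (map m' (enum J)).
have hsI : forall g, isC g -> sat g sI = nI && (g == SI).
  move=> g Cg; have := @sat_sum P (m i0) (map m rI) g Cg.
  rewrite /sI /nI /SI EI /=. rewrite -map_comp. by [].
have hsJ : forall g, isC g -> sat g sJ = nJ && (g == SJ).
  move=> g Cg; have := @sat_sum P (m' j0) (map m' rJ) g Cg.
  rewrite /sJ /nJ /SJ EJ /= -map_comp. by [].
have CSI : nI -> isC SI by rewrite /nI /SI EI; exact: isC_seq.
have CSJ : nJ -> isC SJ by rewrite /nJ /SJ EJ; exact: isC_seq.
have Cl : forall g, isC g -> wsem (WUplus (WPcl D sI) (WPcl D sJ)) g =
   \big[@pv_add D/pv_zero D]_(p : {set {set P}} * {set {set P}} |
           [&& isC p.1, isC p.2, [disjoint p.1 & p.2] & p.1 :|: p.2 == g])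
   (if (nI && (p.1 == SI)) && (nJ && (p.2 == SJ)) then pv_one D else pv_zero D).
  move=> g Cg /=; apply: eq_bigr => p /and4P [C1 C2 _ _].
  by rewrite mul_if hsI // hsJ.
have H01 : forall (b : bool) (x : {set {set P}} * {set {set P}}), true ->
   (if b then pv_one D else pv_zero D) = pv_zero D \/
   (if b then pv_one D else pv_zero D) = pv_one D.
  by move=> b _ _; case: b; [right|left].
split.
- move=> Hne g Cg.
  have dis : [disjoint SI & SJ].
    rewrite -setI_eq0; apply/eqP/setP => x; rewrite !inE.
    apply/negbTE/negP => /andP [/mapP [i _ ->] /mapP [j _ e]].
    by apply: (Hne i j) => h _; rewrite /= e.
  rewrite Cl //.
  have hs : sat g (FPlus sI sJ) = [&& nI, nJ & g == SI :|: SJ].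
    change ([exists g1, exists g2, [&& isC g1, isC g2, g == g1 :|: g2,
        sat g1 sI & sat g2 sJ]] = [&& nI, nJ & g == SI :|: SJ]).
    apply/existsP/and3P.
    + case=> g1 /existsP [g2 /and5P [C1 C2 /eqP -> S1 S2]].
      rewrite hsI // in S1; rewrite hsJ // in S2.
      by case/andP: S1 => -> /eqP ->; case/andP: S2 => -> /eqP ->.
    + case=> nI1 nJ1 /eqP ->; exists SI; apply/existsP; exists SJ.
      by rewrite CSI // CSJ // hsI ?CSI // hsJ ?CSJ // nI1 nJ1 !eqxx.
  change (wsem (WPcl D (FPlus sI sJ)) g) with
     (if sat g (FPlus sI sJ) then pv_one D else pv_zero D).
  rewrite hs.
  case: (boolP [&& nI, nJ & g == SI :|: SJ]) => [/and3P [nI1 nJ1 /eqP eg]|nh].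
  + apply: (@big01_1 D _ _ _ _ (SI,SJ)).
    * by move=> x _; apply: H01.
    * exact: mem_index_enum.
    * by rewrite /= CSI // CSJ // dis eg eqxx.
    * by rewrite /= nI1 nJ1 !eqxx.
  + apply: big01_0 => p /and4P [_ _ _ /eqP ep].
    case: ifP => // /andP [/andP [a /eqP e1] /andP [b /eqP e2]].
    by move: nh; rewrite a b -ep e1 e2 eqxx.
- case=> i [j Heq] g Cg; rewrite Cl //=.
  case: (classic (pv_one D = pv_zero D)) => [e|ne]; first exact: triv_all.
  apply: big01_0 => p /and4P [_ _ dp _].
  case: ifP => // /andP [/andP [a /eqP e1] /andP [b /eqP e2]]; exfalso.
  have mi0 : m i != set0 by apply: (allP a); apply: map_f; rewrite mem_enum.
  have := Heq [set m i] (@isC1 _ _ mi0); rewrite /= sat_fm_C' ?isC1 // mi0 eqxx /=.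
  rewrite sat_fm_C' ?isC1 //; case: ifP => [/andP [_ /eqP /set1_inj eij] _|_ /ne //].
  have h1 : m i \in SI by rewrite inE map_f ?mem_enum.
  have h2 : m i \in SJ by rewrite eij inE map_f ?mem_enum.
  by move: dp; rewrite e1 e2 => dp; rewrite (disjointFr dp h1) in h2.
Qed.
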